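(* Let $b \ge 2$ and $k \ge 1$ be integers, and set $B = b^k$. Let $m\ge 1$ be an integer with $\gcd(m,b)=1$, and let $r$ be an integer with $0\le r<m$. Then there exist infinitely many positive integers $n$ with $n\equiv r \pmod{m}$ such that \[ \mathsf{s}_b(n) \mid n \quad\text{and}\quad \mathsf{s}_B(n) \mid n, \] i.e., infinitely many such $n$ that are simultaneously $b$-Niven and $b^k$-Niven. Moreover, for any $s_0\geq 1$, there exists such an $n$ (positive, $n\equiv r \pmod m$, with $\mathsf{s}_b(n)\mid n$ and $\mathsf{s}_B(n)\mid n$) with $\mathsf{s}_b(n)=\mathsf{s}_B(n)\geq s_0$.
   Context: For an integer base $g\ge 2$ and a positive integer $c$ with base-$g$ expansion $c=\sum_{i=0}^{L} d_i g^i$, $d_i\in\{0,1,\dots,g-1\}$, $d_L\neq 0$, the base-$g$ digit sum is $\mathsf{s}_g(c)=\sum_{i=0}^L d_i$ (and $\mathsf{s}_g(0)=0$). A positive integer $c$ is called $g$-Niven if $\mathsf{s}_g(c)\mid c$. *)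

(* Defs.v *)
From mathcomp Require Import all_boot.
Set Implicit Arguments. Unset Strict Implicit. Unset Printing Implicit Defensive.

(* Base-g digit sum, computed with fuel: the fuel c suffices since each step
   divides by g >= 2 (for g <= 1 the function is not meaningful; the theorem
   only uses g >= 2). *)
Fixpoint digsum_aux (fuel g c : nat) : nat :=
  match fuel with
  | 0 => 0
  | fuel'.+1 => if c == 0 then 0 else c %% g + digsum_aux fuel' g (c %/ g)
  end.

Definition digsum (g c : nat) : nat := digsum_aux c g c.

(* Main.v *)
Require Import Defs.
From mathcomp Require Import all_boot all_fingroup all_solvable.

Lemma digsum_aux_fuel g : 2 <= g -> forall f1 f2 c, c <= f1 -> c <= f2 ->
  digsum_aux f1 g c = digsum_aux f2 g c.
Proof.
move=> g2; elim=> [|f1 IH] [|f2] c /= H1 H2.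
- by [].
- by move: H1; rewrite leqn0 => /eqP ->.
- by move: H2; rewrite leqn0 => /eqP ->.
case: eqP => // /eqP c0; congr (_ + _); apply: IH.
- have : c %/ g < c by rewrite ltn_Pdiv // lt0n.
  move=> h; exact: leq_trans h H1.
- have : c %/ g < c by rewrite ltn_Pdiv // lt0n.
  move=> h; exact: leq_trans h H2.
Qed.

Lemma digsumE g c : 2 <= g ->
  digsum g c = if c == 0 then 0 else c %% g + digsum g (c %/ g).
Proof.
move=> g2; rewrite /digsum; case: c => [|c] //=.
congr (_ + _); apply: digsum_aux_fuel => //.
have : c.+1 %/ g < c.+1 by rewrite ltn_Pdiv // (leq_trans _ g2).
by [].
Qed.

Lemma digsum_mulg g z : 2 <= g -> digsum g (g * z) = digsum g z.
Proof.
move=> g2; have g0 : 0 < g by apply: leq_trans g2.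
rewrite (digsumE _ _ g2) muln_eq0 modnMr mulKn // add0n.
case: z => [|z]; first by rewrite orbT.
by rewrite orbF gtn_eqF.
Qed.

Lemma digsum_expg g p z : 2 <= g -> digsum g (g ^ p * z) = digsum g z.
Proof.
move=> g2; elim: p => [|p IH]; first by rewrite mul1n.
by rewrite expnS -mulnA digsum_mulg.
Qed.

Lemma digsum_1g g w : 2 <= g -> digsum g (1 + g * w) = 1 + digsum g w.
Proof.
move=> g2; rewrite (digsumE _ _ g2) addn_eq0 /=.
rewrite (addnC 1 (g * w)) mulnC modnMDl modn_small // divnMDl ?(leq_trans _ g2) //.
by rewrite divn_small // addn0.
Qed.

Fixpoint rep G s := if s is s'.+1 then 1 + G * rep G s' else 0.

Lemma digsum_rep g p s : 2 <= g -> 0 < p -> digsum g (rep (g ^ p) s) = s.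
Proof.
move=> g2; case: p => // p _; elim: s => [|s IH] /=; first by rewrite (digsumE _ _ g2).
rewrite {1}expnS -mulnA digsum_1g // digsum_expg // IH.
by rewrite add1n.
Qed.

Lemma rep_gt0 G s : 0 < s -> 0 < rep G s.
Proof. by case: s => // s _ /=; rewrite add1n. Qed.

Lemma rep_mod G s M : G = 1 %[mod M] -> rep G s = s %[mod M].
Proof.
move=> Hg; elim: s => [|s IH] //=.
by rewrite -modnDmr -modnMm Hg IH modnMm mul1n modnDmr add1n.
Qed.

Lemma main_part b k m r s0 :
  2 <= b -> 1 <= k -> 1 <= m -> coprime m b -> r < m -> 1 <= s0 ->
  exists n : nat,
      0 < n /\ n = r %[mod m] /\
      digsum b n %| n /\ digsum (b ^ k) n %| n /\
      digsum b n = digsum (b ^ k) n /\ s0 <= digsum b n.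
Proof.
move=> b2 k1 m1 cmb rm s01.
pose x := chinese m b r 1.
pose s := x + s0 * (m * b).
have b0 : 0 < b by apply: leq_trans b2.
have sm : s = r %[mod m] by rewrite /s (addnC x) mulnA mulnAC modnMDl chinese_modl.
have sb : s %% b = 1 by rewrite /s (addnC x) mulnA modnMDl chinese_modr // modn_small.
have cs : coprime s b by rewrite -coprime_modl sb coprime1n.
have ss0 : s0 <= s.
  rewrite /s (leq_trans _ (leq_addl _ _)) // leq_pmulr // muln_gt0.
  by rewrite (leq_trans _ m1) //.
have s1 : 0 < s by apply: leq_trans ss0.
pose L := m * s.
have cL : coprime b L by rewrite coprimeMr !(coprime_sym b) cmb cs.
pose t := totient L.
have t0 : 0 < t by rewrite totient_gt0 muln_gt0 (leq_trans _ m1).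
have bk2 : 2 <= b ^ k.
  by rewrite (leq_trans b2) // -{1}(expn1 b) leq_pexp2l.
have Hp : b ^ (t * k) = 1 %[mod L].
  by rewrite expnM -modnXm Euler_exp_totient // modnXm exp1n.
pose n := rep (b ^ (t * k)) s.
have En : n = rep ((b ^ k) ^ t) s by rewrite /n (mulnC t k) expnM.
have ds1 : digsum b n = s by rewrite digsum_rep // muln_gt0 t0.
have ds2 : digsum (b ^ k) n = s by rewrite En digsum_rep.
have nL : n = s %[mod L] by apply: rep_mod.
have sn : s %| n.
  by rewrite /dvdn -(modn_dvdm n (dvdn_mull m (dvdnn s))) nL modn_dvdm ?modnn // dvdn_mull.
exists n; split; last split; last split; last split; last split.
- exact: rep_gt0.
- by rewrite -sm -(modn_dvdm n (dvdn_mulr s (dvdnn m))) nL modn_dvdm // dvdn_mulr.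
- by rewrite ds1.
- by rewrite ds2.
- by rewrite ds1 ds2.
- by rewrite ds1.
Qed.

Theorem theorem1p1 (b k m r : nat) :
  2 <= b -> 1 <= k -> 1 <= m -> coprime m b -> r < m ->
  (forall N : nat, exists n : nat,
      N < n /\ 0 < n /\ n = r %[mod m] /\
      digsum b n %| n /\ digsum (b ^ k) n %| n) /\
  (forall s0 : nat, 1 <= s0 -> exists n : nat,
      0 < n /\ n = r %[mod m] /\
      digsum b n %| n /\ digsum (b ^ k) n %| n /\
      digsum b n = digsum (b ^ k) n /\ s0 <= digsum b n).
Proof.
move=> b2 k1 m1 cmb rm; split; last by move=> s0; exact: main_part.
move=> N; have [n [n0 [nm [d1 [d2 [_ sn]]]]]] := @main_part b k m r N.+1 b2 k1 m1 cmb rm (ltn0Sn N).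
exists n; split => //; apply: leq_trans sn (dvdn_leq n0 d1).
Qed.
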